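(* Let $S$ be a numerical semigroup with minimal generators $e<a_1<\dots<a_t$, blowup $B$ and generating tuple $\mathcal D=(e,d_1,\dots,d_t)$, $d_i=a_i-e$. Fix $0\le i<e$ and write ${\rm adj}(S_i)=\{u_0<u_1<u_2<\cdots\}$. Then for every $u\in{\rm adj}(S_i)$ there exists $s\in S_i$ with ${\rm d}_{\max}(s;S)=|\mathcal R(u)|$.
   Context: A numerical semigroup is a submonoid of $(\mathbb N,+)$ with finite complement in $\mathbb N$. Its minimal generators are $e<a_1<\dots<a_t$, and $e$ is called the multiplicity. An $S$-factorization of $n\in S$ is a tuple $(c_0,\dots,c_t)\in\mathbb N^{t+1}$ with $c_0e+\sum_{i\ge1}c_ia_i=n$; its length is $\sum c_i$. ${\rm ord}(n;S)$ is the maximum length of an $S$-factorization of $n$, and ${\rm d}_{\max}(n;S)$ is the number of $S$-factorizations of $n$ of length ${\rm ord}(n;S)$. The blowup of $S$ is $B=\langle e,d_1,\dots,d_t\rangle$ with $d_i=a_i-e$. A $B^{\mathcal D}$-factorization of $b\in B$ is a tuple $(x_0,\dots,x_t)\in\mathbb N^{t+1}$ with $x_0e+\sum_{i\ge1}x_id_i=b$, and its length is $\sum x_i$. The minimum such length is denoted $\min{\rm ord}(b;B^{\mathcal D})$, and $\mathcal P(b)$ denotes the set of all $B^{\mathcal D}$-factorizations of $b$. The adjustment of $s\in S$ is ${\rm adj}(s)=s-{\rm ord}(s;S)e$, and ${\rm adj}(U)=\{{\rm adj}(s):s\in U\}$. We write $S_i=\{s\in S: s\equiv i \pmod e\}$.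 The sets $\mathcal R(u_j)$ are defined recursively by $\mathcal R(u_0)=\mathcal P(u_0)$ and, for $j>0$, $\mathcal R(u_j)=\{\mathbf x\in\mathcal P(u_j): |\mathbf x|<\min{\rm ord}(u_{j-1};B^{\mathcal D})-\frac{u_j-u_{j-1}}{e}\}$. *)

(* Defs.v *)
From mathcomp Require Import all_boot.
Set Implicit Arguments. Unset Strict Implicit. Unset Printing Implicit Defensive.

(* Generators are given as a function  h : 'I_k -> nat  (k = t+1 entries,
   index 0 being the multiplicity e).  All generators used below are positive,
   so every coordinate of a factorization of n is <= n; hence factorizations
   of n are encoded as finite functions  'I_k -> 'I_n.+1. *)

Definition flen (k n : nat) (x : {ffun 'I_k -> 'I_n.+1}) : nat :=
  \sum_(j < k) (x j : nat).

Definition facts (k : nat) (h : 'I_k -> nat) (n : nat) :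
    {set {ffun 'I_k -> 'I_n.+1}} :=
  [set x : {ffun 'I_k -> 'I_n.+1} | \sum_(j < k) (x j : nat) * h j == n].

Definition inMon (k : nat) (h : 'I_k -> nat) (n : nat) : Prop :=
  exists c : 'I_k -> nat, \sum_(j < k) c j * h j = n.

Definition min_gens_numsgp (t : nat) (g : 'I_t.+1 -> nat) : Prop :=
  [/\ 0 < g ord0,
      (forall j1 j2 : 'I_t.+1, j1 < j2 -> g j1 < g j2),
      (forall j : 'I_t.+1,
          ~ exists c : 'I_t.+1 -> nat, c j = 0 /\ \sum_(l < t.+1) c l * g l = g j)
    & (exists N, forall n, N <= n -> inMon g n)].

Definition ordS (t : nat) (g : 'I_t.+1 -> nat) (n : nat) : nat :=
  \max_(x in facts g n) flen x.

Definition dmax (t : nat) (g : 'I_t.+1 -> nat) (n : nat) : nat :=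
  #|[set x in facts g n | flen x == ordS g n]|.

Definition blowD (t : nat) (g : 'I_t.+1 -> nat) : 'I_t.+1 -> nat :=
  fun j => if j == ord0 then g ord0 else g j - g ord0.

Definition Pset (t : nat) (g : 'I_t.+1 -> nat) (b : nat) :=
  facts (blowD g) b.

(* min ord(b; B^D).  Every D-factorization of b has length <= b (all entries of
   D are >= 1), so b is a neutral default; for b in B this is the true minimum. *)
Definition minordB (t : nat) (g : 'I_t.+1 -> nat) (b : nat) : nat :=
  \big[minn/b]_(x in Pset g b) flen x.

Definition adj (t : nat) (g : 'I_t.+1 -> nat) (s : nat) : nat :=
  s - ordS g s * g ord0.

Definition inSi (t : nat) (g : 'I_t.+1 -> nat) (i s : nat) : Prop :=
  inMon g s /\ s %% g ord0 = i.

Definition inAdjSi (t : nat) (g : 'I_t.+1 -> nat) (i u : nat) : Prop :=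
  exists s, inSi g i s /\ adj g s = u.

(* Writing adj(S_i) = {u_0 < u_1 < ...}:
   adjPred g i u None      <-> u = u_0 (u is the least element of adj(S_i));
   adjPred g i u (Some v)  <-> u = u_j and v = u_{j-1} for some j > 0. *)
Definition adjPred (t : nat) (g : 'I_t.+1 -> nat) (i u : nat) (pv : option nat)
    : Prop :=
  match pv with
  | None => forall w, inAdjSi g i w -> u <= w
  | Some v => [/\ inAdjSi g i v, v < u &
                 forall w, inAdjSi g i w -> v < w -> u <= w]
  end.

(* R(u_j): R(u_0) = P(u_0), and for j > 0
   R(u_j) = { x in P(u_j) : |x| < min ord(u_{j-1}; B^D) - (u_j - u_{j-1})/e }.
   (Since u_j = u_{j-1} mod e the division is exact; when the right-hand side
   is negative both the integer and the truncated-nat comparisons are false.) *)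
Definition Rset (t : nat) (g : 'I_t.+1 -> nat) (u : nat) (pv : option nat) :=
  match pv with
  | None => Pset g u
  | Some v => [set x in Pset g u |
                 flen x < minordB g v - (u - v) %/ g ord0]
  end.

(* Main.v *)
Require Import Defs.
From mathcomp Require Import all_boot.
From mathcomp Require Import zify.
Set Implicit Arguments. Unset Strict Implicit. Unset Printing Implicit Defensive.

Definition upd k (x : 'I_k.+1 -> nat) a : 'I_k.+1 -> nat :=
  fun j => if j == ord0 then a else x j.

Lemma sum_upd k (x : 'I_k.+1 -> nat) a (h : 'I_k.+1 -> nat) :
  \sum_(j < k.+1) upd x a j * h j + x ord0 * h ord0 =
  \sum_(j < k.+1) x j * h j + a * h ord0.
Proof.
rewrite !big_ord_recl /upd eqxx.
rewrite (eq_bigr (fun i : 'I_k => x (lift ord0 i) * h (lift ord0 i))); last first.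
  by move=> i _; rewrite (_ : (lift ord0 i == ord0) = false).
lia.
Qed.

Lemma len_upd k (x : 'I_k.+1 -> nat) a :
  \sum_(j < k.+1) upd x a j + x ord0 = \sum_(j < k.+1) x j + a.
Proof.
have := sum_upd x a (fun _ => 1).
by rewrite !muln1; under eq_bigr do rewrite muln1; under [X in _ = X + _ -> _]eq_bigr do rewrite muln1.
Qed.

Lemma upd0 k (x : 'I_k.+1 -> nat) a : upd x a ord0 = a.
Proof. by rewrite /upd eqxx. Qed.

Lemma updE k (x : 'I_k.+1 -> nat) a j : j != ord0 -> upd x a j = x j.
Proof. by rewrite /upd => /negbTE ->. Qed.

Lemma ID t (g : 'I_t.+1 -> nat) (c : 'I_t.+1 -> nat) :
  (forall j, g ord0 <= g j) ->
  \sum_(j < t.+1) c j * g j + c ord0 * g ord0 =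
  \sum_(j < t.+1) c j * blowD g j + (\sum_(j < t.+1) c j) * g ord0.
Proof.
move=> Hge.
rewrite big_distrl /= -big_split /= [in RHS]big_ord_recl [in LHS]big_ord_recl.
have E : \sum_(i < t) (c (lift ord0 i) * blowD g (lift ord0 i) +
            c (lift ord0 i) * g ord0) =
         \sum_(i < t) c (lift ord0 i) * g (lift ord0 i).
  apply: eq_bigr => i _.
  by rewrite /blowD (_ : (lift ord0 i == ord0) = false) // -mulnDr subnK.
rewrite E /blowD eqxx; lia.
Qed.

Definition mk k n (c : 'I_k -> nat) : {ffun 'I_k -> 'I_n.+1} :=
  [ffun j => inord (c j)].

Lemma mkE k n (c : 'I_k -> nat) j : c j <= n -> (mk n c j : nat) = c j.
Proof. by move=> h; rewrite ffunE inordK // ltnS. Qed.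

Lemma coord_le k (h c : 'I_k -> nat) j :
  (forall j, 0 < h j) -> c j <= \sum_(l < k) c l * h l.
Proof.
move=> hp; rewrite (bigD1 j) //=; apply: leq_trans (leq_addr _ _).
by rewrite leq_pmulr.
Qed.

Lemma len_le k (h c : 'I_k -> nat) :
  (forall j, 0 < h j) -> \sum_(l < k) c l <= \sum_(l < k) c l * h l.
Proof. by move=> hp; apply: leq_sum => j _; rewrite leq_pmulr. Qed.

Lemma mk_in k (h c : 'I_k -> nat) n :
  (forall j, 0 < h j) -> \sum_(l < k) c l * h l = n ->
  mk n c \in facts h n /\ flen (mk n c) = \sum_(l < k) c l.
Proof.
move=> hp hs.
have hb : forall j, c j <= n by move=> j; rewrite -hs; apply: coord_le.
split; last by apply: eq_bigr => j _; rewrite mkE.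
rewrite inE; apply/eqP; rewrite -[X in _ = X]hs; apply: eq_bigr => j _; by rewrite mkE.
Qed.

Lemma in_facts k (h : 'I_k -> nat) n x :
  x \in facts h n -> \sum_(l < k) (x l : nat) * h l = n.
Proof. by rewrite inE => /eqP. Qed.

Lemma ordS_ge t (g c : 'I_t.+1 -> nat) n :
  (forall j, 0 < g j) -> \sum_(l < t.+1) c l * g l = n ->
  \sum_(l < t.+1) c l <= Defs.ordS g n.
Proof.
move=> hp hs; have [hin hl] := mk_in hp hs.
rewrite -hl /Defs.ordS; exact: (leq_bigmax_cond (P := fun x => x \in facts g n) (F := fun x => flen x) _ hin).
Qed.

Lemma ordS_ex t (g : 'I_t.+1 -> nat) n :
  (forall j, 0 < g j) -> inMon g n ->
  exists c : 'I_t.+1 -> nat, \sum_(l < t.+1) c l * g l = n /\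
     \sum_(l < t.+1) c l = Defs.ordS g n.
Proof.
move=> hp [c0 hc0]; have [hin _] := mk_in hp hc0.
have hc : 0 < #|facts g n| by apply/card_gt0P; exists (mk n c0).
have [x hx hmax] := eq_bigmax_cond (fun x => flen x) hc.
exists (fun j => nat_of_ord (x j)); split; first exact: in_facts hx.
by rewrite /Defs.ordS hmax.
Qed.

Lemma bigmin_seq (T : eqType) (s : seq T) (P : pred T) (F : T -> nat) b x0 :
  x0 \in s -> P x0 -> \big[minn/b]_(i <- s | P i) F i <= F x0.
Proof.
elim: s => // y s IH; rewrite inE big_cons => /orP [/eqP <- | hs] hP.
  by rewrite hP geq_minl.
case: (P y); last exact: IH.
by apply: leq_trans (geq_minr _ _) (IH hs hP).
Qed.

Lemma minord_le t (g y : 'I_t.+1 -> nat) v :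
  (forall j, 0 < blowD g j) -> \sum_(l < t.+1) y l * blowD g l = v ->
  minordB g v <= \sum_(l < t.+1) y l.
Proof.
move=> hp hs; have [hin hl] := mk_in hp hs.
rewrite -hl /minordB; apply: bigmin_seq => //; exact: mem_index_enum.
Qed.

Lemma minord_ex t (g y : 'I_t.+1 -> nat) v :
  (forall j, 0 < blowD g j) -> \sum_(l < t.+1) y l * blowD g l = v ->
  exists z : 'I_t.+1 -> nat, \sum_(l < t.+1) z l * blowD g l = v /\
     \sum_(l < t.+1) z l = minordB g v.
Proof.
move=> hp hs.
have : minordB g v = v \/ exists x, x \in Pset g v /\ flen x = minordB g v.
  rewrite /minordB; apply: (big_ind (fun z => z = v \/ exists x, x \in Pset g v /\ flen x = z)).
  - by left.
  - move=> a b' ha hb /=; case: (leqP a b') => hab.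
      by [].
    by [].
  - by move=> x hx; right; exists x.
case=> [hv | [x [hx hl]]].
  exists y; split => //; apply/eqP; rewrite eqn_leq (minord_le hp hs) andbT hv.
  by rewrite -[X in _ <= X]hs; apply: len_le.
by exists (fun j => nat_of_ord (x j)); split => //; apply: in_facts hx.
Qed.

Lemma blowD0 t (g : 'I_t.+1 -> nat) : blowD g ord0 = g ord0.
Proof. by rewrite /blowD eqxx. Qed.

Lemma CLF t (g : 'I_t.+1 -> nat) (x : 'I_t.+1 -> nat) b m :
  (forall j, g ord0 <= g j) ->
  \sum_(l < t.+1) x l * blowD g l = b ->
  \sum_(l < t.+1) x l <= m + 2 * x ord0 ->
  \sum_(l < t.+1) upd x (m + 2 * x ord0 - \sum_(l < t.+1) x l) l * g l
     = b + m * g ord0 /\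
  \sum_(l < t.+1) upd x (m + 2 * x ord0 - \sum_(l < t.+1) x l) l = m + x ord0.
Proof.
move=> Hge hb hl.
set a := m + 2 * x ord0 - \sum_(l < t.+1) x l.
have h1 := sum_upd x a (blowD g); rewrite blowD0 in h1.
have h2 := len_upd x a.
have h3 := ID (upd x a) Hge; rewrite upd0 in h3.
have hc : \sum_(l < t.+1) upd x a l = m + x ord0 by rewrite /a in h2 *; lia.
split => //.
rewrite hc in h3.
move: h1 h3; rewrite hb /a; set A := \sum_(l < t.+1) upd x _ l * g l;
  set B := \sum_(l < t.+1) upd x _ l * blowD g l.
move: hl; set X := \sum_(l < t.+1) x l; move=> hl h1 h3.
nia.
Qed.

Lemma CLB t (g : 'I_t.+1 -> nat) (c : 'I_t.+1 -> nat) s :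
  (forall j, g ord0 <= g j) ->
  \sum_(l < t.+1) c l * g l = s ->
  \sum_(l < t.+1) upd c 0 l * blowD g l + (\sum_(l < t.+1) c l) * g ord0 = s
  /\ \sum_(l < t.+1) upd c 0 l + c ord0 = \sum_(l < t.+1) c l.
Proof.
move=> Hge hs.
have h1 := sum_upd c 0 (blowD g); rewrite blowD0 in h1.
have h2 := len_upd c 0.
have h3 := ID c Hge.
split; last by rewrite h2 addn0.
rewrite hs in h3; lia.
Qed.

Lemma adj_props t (g : 'I_t.+1 -> nat) s :
  (forall j, 0 < g j) -> (forall j, g ord0 <= g j) -> inMon g s ->
  Defs.ordS g s * g ord0 <= s /\ adj g s + Defs.ordS g s * g ord0 = s.
Proof.
move=> Hp Hge hs; have [c [hc hl]] := ordS_ex Hp hs.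
have [h1 _] := CLB Hge hc; rewrite hl in h1.
split; first lia.
rewrite /adj; lia.
Qed.

Lemma ML t (g : 'I_t.+1 -> nat) s n :
  (forall j, 0 < g j) -> (forall j, g ord0 <= g j) -> inMon g s ->
  inMon g (s + n * g ord0) /\ adj g (s + n * g ord0) <= adj g s.
Proof.
move=> Hp Hge hs; have [c [hc hl]] := ordS_ex Hp hs.
have h1 := sum_upd c (c ord0 + n) g.
have h2 := len_upd c (c ord0 + n).
have hs' : \sum_(l < t.+1) upd c (c ord0 + n) l * g l = s + n * g ord0.
  rewrite hc in h1; lia.
have ho := ordS_ge Hp hs'.
split; first by exists (upd c (c ord0 + n)).
have [a1 a2] := adj_props Hp Hge hs.
rewrite /adj; rewrite /adj in a2.
have : (\sum_(l < t.+1) c l + n) * g ord0 <= Defs.ordS g (s + n * g ord0) * g ord0.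
  apply: leq_mul => //; lia.
rewrite hl mulnDl => H; lia.
Qed.

Definition nv k n (x : {ffun 'I_k -> 'I_n.+1}) : 'I_k -> nat :=
  fun j => nat_of_ord (x j).

Lemma count_dmax t (g : 'I_t.+1 -> nat) (u m s : nat)
  (R : {set {ffun 'I_t.+1 -> 'I_u.+1}}) :
  (forall j, 0 < g j) -> (forall j, g ord0 <= g j) ->
  (forall j, 0 < blowD g j) ->
  s = u + m * g ord0 -> Defs.ordS g s = m ->
  (forall x, x \in R = [&& x \in Pset g u, (x ord0 : nat) == 0 & flen x <= m]) ->
  dmax g s = #|R|.
Proof.
move=> Hp Hge HpD hs ho HR.
have hms : m <= s by rewrite hs; have := Hp ord0; nia.
have hus : u <= s by rewrite hs leq_addr.
pose f := fun x : {ffun 'I_t.+1 -> 'I_u.+1} =>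
  mk s (upd (nv x) (m - flen x)).
have fE : forall x j, (f x j : nat) = upd (nv x) (m - flen x) j.
  move=> x j; rewrite mkE // /upd; case: (j == ord0).
    by apply: leq_trans (leq_subr _ _) hms.
  by apply: leq_trans hus; rewrite /nv -ltnS.
have finj : {in R &, injective f}.
  move=> x y hx hy hxy; apply/ffunP => j; apply/val_inj => /=.
  have := congr1 (fun F : {ffun 'I_t.+1 -> 'I_s.+1} => nat_of_ord (F j)) hxy; rewrite /= !fE /upd.
  case: eqP => [-> _|_]; last by [].
  move: hx hy; rewrite !HR => /and3P [_ /eqP -> _] /and3P [_ /eqP -> _] //.
rewrite /dmax ho -(card_in_imset finj); apply: eq_card => c.
rewrite inE; apply/andP/imsetP.
- move=> [hc /eqP hl].
  have [h1 h2] := CLB (c := nv c) Hge (in_facts hc).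
  have hl' : \sum_(l < t.+1) nv c l = m by [].
  rewrite hl' in h1 h2.
  have hD : \sum_(l < t.+1) upd (nv c) 0 l * blowD g l = u by lia.
  have [hin hfl] := mk_in HpD hD.
  have hc0 : nv c ord0 <= m by lia.
  exists (mk u (upd (nv c) 0)).
    rewrite HR hin /= hfl; apply/andP; split; last lia.
    by rewrite mkE ?upd0 // -hD; apply: coord_le.
  apply/ffunP => j; apply/val_inj; rewrite /= fE hfl.
  case: (eqVneq j ord0) => [->|hj]; first by rewrite upd0; move: h2; rewrite /nv; lia.
  rewrite updE // /nv mkE ?updE //.
  by have := coord_le (upd (nv c) 0) j HpD; rewrite hD updE.
- move=> [x hx ->].
  move: (hx); rewrite HR => /and3P [hxP /eqP hx0 hxl].
  have hD : \sum_(l < t.+1) nv x l * blowD g l = u := in_facts hxP.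
  have hx0' : nv x ord0 = 0 by [].
  have hxl' : \sum_(l < t.+1) nv x l <= m + 2 * nv x ord0.
    by rewrite hx0'; move: hxl; rewrite /flen /nv; lia.
  have [c1 c2] := CLF (m := m) Hge hD hxl'.
  rewrite hx0' in c1 c2.
  rewrite muln0 addn0 in c1 c2.
  have E : forall l, (f x l : nat) = upd (nv x) (m - \sum_(l < t.+1) nv x l) l.
    by move=> l; rewrite fE.
  split.
    rewrite inE; apply/eqP; rewrite [X in _ = X]hs -c1.
    by apply: eq_bigr => l _; rewrite E.
  apply/eqP; rewrite /flen -[X in _ = X]c2.
  by apply: eq_bigr => l _; rewrite E.
Qed.

Lemma modE a n e : (a + n * e) %% e = a %% e.
Proof. by rewrite addnC modnMDl. Qed.

Lemma adjS_facts t (g : 'I_t.+1 -> nat) i w :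
  (forall j, 0 < g j) -> (forall j, g ord0 <= g j) -> inAdjSi g i w ->
  exists sw m (x : 'I_t.+1 -> nat),
    [/\ inMon g sw, sw %% g ord0 = i, Defs.ordS g sw = m,
        sw = w + m * g ord0 &
     [/\ \sum_(l < t.+1) x l * blowD g l = w, x ord0 = 0,
         \sum_(l < t.+1) x l <= m & w %% g ord0 = i]].
Proof.
move=> Hp Hge [sw [[hM hmod] hadj]].
have [a1 a2] := adj_props Hp Hge hM.
have [c [hc hl]] := ordS_ex Hp hM.
have [h1 h2] := CLB Hge hc.
exists sw, (Defs.ordS g sw), (upd c 0).
have hsw : sw = w + Defs.ordS g sw * g ord0 by rewrite -hadj a2.
split => //.
split; [ |by rewrite upd0| lia|].
  by rewrite hl in h1; lia.
by rewrite -hmod [in RHS]hsw modE.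
Qed.

Lemma adj_le t (g : 'I_t.+1 -> nat) s (c : 'I_t.+1 -> nat) :
  (forall j, 0 < g j) -> (forall j, g ord0 <= g j) ->
  \sum_(l < t.+1) c l * g l = s ->
  adj g s + (\sum_(l < t.+1) c l) * g ord0 <= s.
Proof.
move=> Hp Hge hc.
have hM : inMon g s by exists c.
have [a1 a2] := adj_props Hp Hge hM.
have ho := ordS_ge Hp hc.
have : (\sum_(l < t.+1) c l) * g ord0 <= Defs.ordS g s * g ord0 by rewrite leq_mul2r ho orbT.
rewrite /adj in a2 *; lia.
Qed.

Theorem theorem3p9 (t : nat) (g : 'I_t.+1 -> nat) (i : nat) :
  min_gens_numsgp g -> i < g ord0 ->
  forall (u : nat) (pv : option nat),
    inAdjSi g i u -> adjPred g i u pv ->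
    exists s, inSi g i s /\ dmax g s = #|Rset g u pv|.
Proof.
move=> [Hg0 Hinc _ _] hi u pv hu hpv.
have Hge : forall j, g ord0 <= g j.
  move=> j; case: (eqVneq j ord0) => [->//|hj].
  by apply/ltnW/Hinc; rewrite lt0n.
have Hp : forall j, 0 < g j by move=> j; exact: leq_trans Hg0 (Hge j).
have HpD : forall j, 0 < blowD g j.
  move=> j; rewrite /blowD; case: (eqVneq j ord0) => [//|hj].
  by rewrite subn_gt0; apply/Hinc; rewrite lt0n.
have [s0 [m0 [xu [hs0M hs0i hs0o hs0 [hxuD hxu0 hxul hui]]]]] := adjS_facts Hp Hge hu.
case: pv hpv => [v|] /= hpv.
-
  case: hpv => hv hvu hpred.
  have [sv [mv [yv [hsvM hsvi hsvo hsv [hyvD hyv0 hyvl hvi]]]]] := adjS_facts Hp Hge hv.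
  have [ys [hysD hysl]] := minord_ex HpD hyvD.
  have hmu : minordB g v <= mv := leq_trans (minord_le HpD hyvD) hyvl.
  move: hmu hysl; set mu := minordB g v => hmu hysl.
  set q := (u - v) %/ g ord0.
  have hq : u = v + q * g ord0.
    have hu' := divn_eq u (g ord0); have hv' := divn_eq v (g ord0).
    rewrite hui in hu'; rewrite hvi in hv'.
    have E : u - v = (u %/ g ord0 - v %/ g ord0) * g ord0.
      by rewrite mulnBl; clear -hu' hv'; lia.
    by rewrite /q E mulnK // -E subnKC // ltnW.
  have hq1 : 0 < q.
    rewrite lt0n; apply/eqP => h0; rewrite h0 mul0n addn0 in hq; clear -hq hvu; lia.
  have hmu1 : m0 + q < mu.
    rewrite ltnNge; apply/negP => hle.
    have hl2 : \sum_(l < t.+1) ys l <= (m0 + q) + 2 * ys ord0 by clear -hle hysl; lia.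
    have [c1 c2] := CLF Hge hysD hl2.
    have := ordS_ge Hp c1.
    have -> : v + (m0 + q) * g ord0 = s0 by clear -hs0 hq; rewrite hs0 hq mulnDl; lia.
    rewrite hs0o c2; clear -hq1; lia.
  pose m := mu - q - 1.
  have hm : m = mu - q - 1 by [].
  pose s := u + m * g ord0.
  have hs : s = u + m * g ord0 by [].
  have hxul2 : \sum_(l < t.+1) xu l <= m + 2 * xu ord0 by rewrite hxu0; clear -hxul hm hmu1; lia.
  have [d1 d2] := CLF Hge hxuD hxul2.
  rewrite hxu0 muln0 addn0 in d1 d2.
  have hMs : inMon g s by exists (upd xu (m - \sum_(l < t.+1) xu l)).
  have hsge : m <= Defs.ordS g s by rewrite -d2; apply: ordS_ge.
  have [a1 a2] := adj_props Hp Hge hMs.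
  have hsi : s %% g ord0 = i by rewrite hs modE.
  have hme : m * g ord0 <= Defs.ordS g s * g ord0 by rewrite leq_mul2r hsge orbT.
  have hadj_le : adj g s <= u by clear -a2 hme hs; lia.
  have hsv2 : s = v + (mu - 1) * g ord0.
    rewrite hs hq -addnA -mulnDl; congr (_ + _ * _); clear -hm hmu1; lia.
  have hsv' : sv = s + (mv - (mu - 1)) * g ord0.
    by rewrite hsv hsv2 -addnA -mulnDl; congr (_ + _ * _); clear -hmu; lia.
  have [_ hML] := ML (mv - (mu - 1)) Hp Hge hMs.
  rewrite -hsv' in hML.
  have hadj_sv : adj g sv = v by rewrite /adj hsvo hsv addnK.
  rewrite hadj_sv in hML.
  have hneq : adj g s != v.
    apply/eqP => hav.
    have [c [hc hl]] := ordS_ex Hp hMs.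
    have [h1 h2] := CLB Hge hc.
    rewrite hl in h1 h2.
    have ho : Defs.ordS g s * g ord0 = (mu - 1) * g ord0 by clear -a2 hav hsv2; lia.
    move/eqP: ho; rewrite eqn_pmul2r // => /eqP ho.
    rewrite ho in h1 h2.
    have hD : \sum_(l < t.+1) upd c 0 l * blowD g l = v by clear -h1 hsv2; lia.
    have := minord_le HpD hD; rewrite -/mu; clear -h2 hmu1; lia.
  have hau : adj g s = u.
    have hlt : v < adj g s by rewrite ltn_neqAle eq_sym hneq hML.
    have := hpred _ (ex_intro _ s (conj (conj hMs hsi) erefl)) hlt.
    clear -hadj_le; lia.
  have hso : Defs.ordS g s = m.
    have ho : Defs.ordS g s * g ord0 = m * g ord0 by clear -a2 hau hs; lia.
    by move/eqP: ho; rewrite eqn_pmul2r // => /eqP.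
  exists s; split; first by [].
  apply: (count_dmax (m := m)) => // x.
  rewrite /Rset inE; case hxP : (x \in Pset g u) => //=.
  have hD := in_facts hxP.
  rewrite -/mu -/q.
  case: (posnP (x ord0 : nat)) => hk.
    rewrite /=; apply/idP/idP => h; clear -h hm hmu1; lia.
  rewrite ?(gtn_eqF hk) /=; apply/negP => hlt.
  have hfl : flen x = \sum_(l < t.+1) nv x l by [].
  have hD' : \sum_(l < t.+1) nv x l * blowD g l = u := hD.
  have hk' : 0 < nv x ord0 := hk.
  have hl3 : \sum_(l < t.+1) nv x l <= m + 2 * nv x ord0.
    by rewrite -hfl; clear -hlt hm hmu1; lia.
  have [e1 e2] := CLF Hge hD' hl3.
  have := ordS_ge Hp e1; rewrite -hs hso e2; clear -hk'; lia.

-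
  have clA : forall x : 'I_t.+1 -> nat,
      \sum_(l < t.+1) x l * blowD g l = u -> x ord0 = 0.
    move=> x hx; case: (posnP (x ord0)) => // hk; exfalso.
    have h1 := sum_upd x 0 (blowD g); rewrite blowD0 hx in h1.
    have h3 := ID (upd x 0) Hge; rewrite upd0 mul0n addn0 in h3.
    set sig := \sum_(l < t.+1) upd x 0 l * g l in h3.
    have hM : inMon g sig by exists (upd x 0).
    have hsi : sig %% g ord0 = i.
      have h1' : u = \sum_(l < t.+1) upd x 0 l * blowD g l + x ord0 * g ord0 by lia.
      by rewrite h3 modE -hui h1' modE.
    have := hpv _ (ex_intro _ sig (conj (conj hM hsi) erefl)).
    have := adj_le Hp Hge (erefl sig).
    nia.
  have hxul' : \sum_(l < t.+1) xu l <= u + 2 * xu ord0.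
    by rewrite -[X in _ <= X + _]hxuD; apply: leq_trans (len_le _ HpD) (leq_addr _ _).
  have [c1 c2] := CLF Hge hxuD hxul'.
  rewrite hxu0 muln0 addn0 in c1 c2.
  set s := u + u * g ord0 in c1.
  have hMs : inMon g s by exists (upd xu (u - \sum_(l < t.+1) xu l)).
  have hso : Defs.ordS g s = u.
    apply/eqP; rewrite eqn_leq; apply/andP; split; last first.
      by rewrite -[X in X <= _]c2; apply: ordS_ge.
    rewrite leqNgt; apply/negP => hL.
    have [c [hc hl]] := ordS_ex Hp hMs.
    have [h1 h2] := CLB Hge hc.
    set L := Defs.ordS g s in hL hl.
    have h4 := sum_upd (upd c 0) (L - u) (blowD g).
    rewrite upd0 mul0n addn0 blowD0 in h4.
    have h5 : \sum_(l < t.+1) upd (upd c 0) (L - u) l * blowD g l = u.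
      rewrite hl in h1; rewrite h4; rewrite /s in h1; nia.
    have := clA _ h5; rewrite upd0; lia.
  exists s; split.
    by split => //; rewrite /s modE.
  apply: (count_dmax (m := u)) => // x.
  rewrite /Rset; case hxP : (x \in Pset g u) => //=.
  have hD := in_facts hxP.
  have -> : (x ord0 : nat) = 0 := clA _ hD.
  rewrite eqxx /=; rewrite -[X in _ <= X]hD /flen; symmetry; apply: len_le HpD.
Qed.
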